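(* Let $P$ be a finite partially ordered set having an infimum operation $\wedge$ and a greatest element $\top$, put $P^\times=P\setminus\{\top\}$, and let $U\colon P\to\mathbf{Ab}$ be a presheaf admitting an extender $\lambda$. Then the homomorphism $U(\top)\to\lim_{p\in P^\times}U(p)$, $u\mapsto(u|_p)_{p\in P^\times}$, is surjective.
   Context: A presheaf $U\colon P\to\mathbf{Ab}$ is a contravariant functor: abelian groups $U(p)$ and restriction homomorphisms $u\mapsto u|_q\colon U(p)\to U(q)$ for $p\ge q$, functorial. $\lim_{p\in P^\times}U(p)$ is the group of families $(u_p)_{p\in P^\times}$, $u_p\in U(p)$, with $u_p|_q=u_q$ whenever $p\ge q$. An extender for $U$ is a collection of homomorphisms $\lambda^q_p\colon U(q)\to U(p)$, for $p,q\in P$ with $p\ge q$, such that for all $p,q\in P$ and $x\in U(q)$: $\lambda^q_p(x)|_q=x$ whenever $p\ge q$, and $\lambda^q_\top(x)|_p=\lambda^{p\wedge q}_p(x|_{p\wedge q})$. *)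

(* Defs.v *)
From HB Require Import structures.
From mathcomp Require Import all_boot all_order all_algebra.
Set Implicit Arguments. Unset Strict Implicit. Unset Printing Implicit Defensive.
Import Order.TTheory GRing.Theory.

Local Open Scope order_scope.

(* The
   restriction maps are given as a total family [res p q : U p -> U q] of
   additive maps, only meaningful (and only constrained) when q <= p. *)
Definition is_presheaf d (P : porderType d) (U : P -> zmodType)
    (res : forall p q : P, {additive U p -> U q}) : Prop :=
  (forall (p : P) (x : U p), res p p x = x) /\
  (forall (p q r : P) (x : U p), r <= q -> q <= p ->
      res q r (res p q x) = res p r x).

Definition is_extender d (P : tMeetSemilatticeType d) (U : P -> zmodType)
    (res : forall p q : P, {additive U p -> U q})
    (lam : forall q p : P, {additive U q -> U p}) : Prop :=
  (forall (p q : P) (x : U q), q <= p -> res p q (lam q p x) = x) /\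
  (forall (p q : P) (x : U q),
      res \top p (lam q \top x) = lam (p `&` q) p (res q (p `&` q) x)).

(* Elements of lim_{p in P^x} U(p), P^x = P \ {top}: compatible families
   indexed by p != top (values at top are irrelevant). *)
Definition in_lim_Ptimes d (P : tMeetSemilatticeType d) (U : P -> zmodType)
    (res : forall p q : P, {additive U p -> U q})
    (u : forall p : P, U p) : Prop :=
  forall p q : P, p != \top -> q != \top -> q <= p -> res p q (u p) = u q.

(* Main.v *)
Require Import Defs.
From HB Require Import structures.
From mathcomp Require Import all_boot all_order all_algebra.
Import Order.TTheory GRing.Theory.
Local Open Scope order_scope.

Lemma count_lt_aux (T : eqType) (s : seq T) (a b : pred T) x :
  (forall y, b y -> a y) -> x \in s -> a x -> ~~ b x ->
  (count b s < count a s)%N.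
Proof.
move=> Hba; elim: s => [//|y s IH]; rewrite in_cons /= => /orP [/eqP ->|Hx] ax nbx.
  rewrite ax (negbTE nbx) add0n add1n ltnS.
  by apply: sub_count.
have := IH Hx ax nbx.
case: (b y) (Hba y) => [->//|_]; rewrite ?add0n ?add1n //.
case: (a y) => //= H; rewrite ?add1n ?add0n //; exact: ltn_trans H _.
Qed.

Theorem lemma9p2 (d : Order.disp_t) (P : tMeetSemilatticeType d)
    (P_finite : exists s : seq P, forall p : P, p \in s)
    (U : P -> zmodType)
    (res : forall p q : P, {additive U p -> U q})
    (lam : forall q p : P, {additive U q -> U p}) :
  is_presheaf res -> is_extender res lam ->
  forall u : forall p : P, U p, in_lim_Ptimes res u ->
  exists v : U \top, forall p : P, p != \top -> res \top p v = u p.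
Proof.
move=> [res_id res_comp] [lam_res lam_top] u Hu.
case: P_finite => s Hs.
pose w (v : U \top) (p : P) : U p := (u p - res \top p v)%R.
pose bad v : pred P := fun p => (p != \top) && (w v p != 0%R).
have ntop : forall p r : P, p != \top -> r <= p -> r != \top.
  move=> p r Hp Hr; apply/negP => /eqP E; move: Hr; rewrite E => Ht.
  by move: Hp; rewrite eq_le Ht lex1.
have wres : forall v (p r : P), p != \top -> r <= p -> res p r (w v p) = w v r.
  move=> v p r Hp Hr; rewrite /w raddfB /= Hu //; last exact: ntop Hr.
  by rewrite res_comp // lex1.
suff main : forall n v, (count (bad v) s <= n)%N ->
   exists v', forall p, p != \top -> res \top p v' = u p.
  exact: (main _ 0%R (leqnn _)).
elim=> [|n IH] v Hn.
  exists v => p Hp; apply/eqP; rewrite -subr_eq0; apply/negPn/negP => Hw.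
  have : (0 < count (bad v) s)%N.
    rewrite -has_count; apply/hasP; exists p; first exact: Hs.
    by rewrite /bad Hp /= /w -oppr_eq0 opprB.
  by rewrite lt0n; move: Hn; rewrite leqn0 => ->.
case Hh: (has (bad v) s); last first.
  exists v => p Hp; apply/eqP; rewrite -subr_eq0; apply/negPn/negP => Hw.
  by move/negbT/hasPn: Hh => /(_ p (Hs p)); rewrite /bad Hp /= /w -oppr_eq0 opprB Hw.
case/hasP: Hh => p _ /andP [Hp Hwp].
pose v' := (v + lam p \top (w v p))%R.
have Hv'q : forall q, res \top q v' = (res \top q v + lam (q `&` p) q (res p (q `&` p) (w v p)))%R.
  by move=> q; rewrite /v' raddfD /= lam_top.
apply: (IH v'); rewrite -ltnS; apply: leq_trans Hn.
apply: (@count_lt_aux _ s (bad v) (bad v') p) => //.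
- move=> q /andP [Hq Hwq]; rewrite /bad Hq /=; apply: contra Hwq => /eqP H0.
  rewrite /w Hv'q.
  have -> : res p (q `&` p) (w v p) = 0%R.
    rewrite wres // ?leIr //.
    rewrite -(wres v q (q `&` p) Hq (leIl q p)) H0.
    exact: raddf0.
  rewrite raddf0 addr0; apply/eqP; exact: H0.
- by rewrite /bad Hp.
- rewrite /bad Hp /= negbK /w /v' raddfD /= lam_res ?lex1 //.
  by rewrite /w addrCA subrr addr0 subrr.
Qed.
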